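(* For a nondegenerate m-triangle, the torque $\mathbf t_1$ of the gravitational forces at $P_1$ with respect to the center of mass vanishes if and only if $r_{12}=r_{13}$, and all three torques $\mathbf t_1,\mathbf t_2,\mathbf t_3$ vanish if and only if the triangle is equilateral.
   Context: Masses $m_1,m_2,m_3>0$, $m_1+m_2+m_3=1$; position vectors $\mathbf a_i=\overrightarrow{OP_i}$ with $\sum m_i\mathbf a_i=0$; $r_{ij}=|\mathbf a_i-\mathbf a_j|$; $\mathbf t_i=\mathbf a_i\times\sum_{j\ne i}\frac{m_im_j}{r_{ij}^3}(\mathbf a_j-\mathbf a_i)$; nondegenerate means $P_1,P_2,P_3$ are not collinear. *)

(* Defs.v *)
From Stdlib Require Import Reals.
Open Scope R_scope.

Record vec3 : Type := V3 { vx : R; vy : R; vz : R }.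

Definition vzero : vec3 := V3 0 0 0.
Definition vadd (u v : vec3) : vec3 := V3 (vx u + vx v) (vy u + vy v) (vz u + vz v).
Definition vsub (u v : vec3) : vec3 := V3 (vx u - vx v) (vy u - vy v) (vz u - vz v).
Definition vscale (c : R) (u : vec3) : vec3 := V3 (c * vx u) (c * vy u) (c * vz u).
Definition vdot (u v : vec3) : R := vx u * vx v + vy u * vy v + vz u * vz v.
Definition vnorm (u : vec3) : R := sqrt (vdot u u).
Definition vcross (u v : vec3) : vec3 :=
  V3 (vy u * vz v - vz u * vy v)
     (vz u * vx v - vx u * vz v)
     (vx u * vy v - vy u * vx v).

Definition rdist (u v : vec3) : R := vnorm (vsub u v).

Definition torque (mi mj mk : R) (ai aj ak : vec3) : vec3 :=
  vcross ai (vadd (vscale (mi * mj / (rdist ai aj) ^ 3) (vsub aj ai))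
                  (vscale (mi * mk / (rdist ai ak) ^ 3) (vsub ak ai))).

Definition nondegenerate (a1 a2 a3 : vec3) : Prop :=
  vcross (vsub a2 a1) (vsub a3 a1) <> vzero.

Definition equilateral (a1 a2 a3 : vec3) : Prop :=
  rdist a1 a2 = rdist a1 a3 /\ rdist a1 a2 = rdist a2 a3.

(* Main.v *)
Require Import Defs.
From Stdlib Require Import Reals Lra Psatz.
Open Scope R_scope.

Lemma torque_formula (mi mj mk : R) (ai aj ak : vec3) :
  mi <> 0 ->
  mi * vx ai + mj * vx aj + mk * vx ak = 0 ->
  mi * vy ai + mj * vy aj + mk * vy ak = 0 ->
  mi * vz ai + mj * vz aj + mk * vz ak = 0 ->
  torque mi mj mk ai aj ak =
  vscale (mj * mk * (/ (rdist ai aj) ^ 3 - / (rdist ai ak) ^ 3)) (vcross aj ak).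
Proof.
  intros Hm Hx Hy Hz. unfold torque, Rdiv.
  generalize (/ rdist ai aj ^ 3) as u. generalize (/ rdist ai ak ^ 3) as v.
  intros v u.
  destruct ai as [x1 y1 z1], aj as [x2 y2 z2], ak as [x3 y3 z3]; simpl in *.
  assert (E1 : x1 = - (mj * x2 + mk * x3) / mi) by (field_simplify_eq; lra).
  assert (E2 : y1 = - (mj * y2 + mk * y3) / mi) by (field_simplify_eq; lra).
  assert (E3 : z1 = - (mj * z2 + mk * z3) / mi) by (field_simplify_eq; lra).
  subst x1 y1 z1.
  unfold vcross, vadd, vscale, vsub; simpl. f_equal; field; auto.
Qed.

Lemma rdist_pos (a b : vec3) : a <> b -> 0 < rdist a b.
Proof.
  intros H. unfold rdist, vnorm.
  destruct (Rle_lt_dec (vdot (vsub a b) (vsub a b)) 0) as [Hle|Hlt].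
  - exfalso. apply H. destruct a as [x1 y1 z1], b as [x2 y2 z2].
    unfold vdot, vsub in Hle; simpl in Hle.
    pose proof (Rle_0_sqr (x1 - x2)); pose proof (Rle_0_sqr (y1 - y2));
    pose proof (Rle_0_sqr (z1 - z2)); unfold Rsqr in *.
    assert ((x1 - x2) * (x1 - x2) = 0) by lra.
    assert ((y1 - y2) * (y1 - y2) = 0) by lra.
    assert ((z1 - z2) * (z1 - z2) = 0) by lra.
    assert (x1 = x2) by (destruct (Rmult_integral _ _ H3); lra).
    assert (y1 = y2) by (destruct (Rmult_integral _ _ H4); lra).
    assert (z1 = z2) by (destruct (Rmult_integral _ _ H5); lra).
    subst; reflexivity.
  - apply sqrt_lt_R0; exact Hlt.
Qed.

Lemma cube_inj (r s : R) : 0 < r -> 0 < s -> / r ^ 3 = / s ^ 3 -> r = s.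
Proof.
  intros Hr Hs H.
  assert (r ^ 3 = s ^ 3).
  { rewrite <- (Rinv_inv (r^3)), <- (Rinv_inv (s^3)), H. reflexivity. }
  destruct (Rtotal_order r s) as [Hl|[He|Hg]]; auto.
  - exfalso. simpl in H0. assert (r*r < s*s) by nra. nra.
  - exfalso. simpl in H0. assert (s*s < r*r) by nra. nra.
Qed.

Lemma torque_zero_iff (mi mj mk : R) (ai aj ak : vec3) :
  0 < mi -> 0 < mj -> 0 < mk ->
  mi * vx ai + mj * vx aj + mk * vx ak = 0 ->
  mi * vy ai + mj * vy aj + mk * vy ak = 0 ->
  mi * vz ai + mj * vz aj + mk * vz ak = 0 ->
  vcross (vsub aj ai) (vsub ak ai) <> vzero ->
  (torque mi mj mk ai aj ak = vzero <-> rdist ai aj = rdist ai ak).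
Proof.
  intros H1 H2 H3 Hx Hy Hz HN.
  rewrite torque_formula by (auto; lra).
  assert (Hc : vcross aj ak <> vzero).
  { intro Hc0. apply HN.
    destruct ai as [x1 y1 z1], aj as [x2 y2 z2], ak as [x3 y3 z3]; simpl in *.
    unfold vcross, vzero in *; simpl in *. injection Hc0; intros C1 C2 C3.
    assert (E1 : x1 = - (mj * x2 + mk * x3) / mi) by (field_simplify_eq; lra).
    assert (E2 : y1 = - (mj * y2 + mk * y3) / mi) by (field_simplify_eq; lra).
    assert (E3 : z1 = - (mj * z2 + mk * z3) / mi) by (field_simplify_eq; lra).
    subst x1 y1 z1. unfold vsub; simpl. f_equal.
    - transitivity ((mi+mj+mk)/mi * (y2*z3 - z2*y3)); [field; lra | rewrite C3; ring].
    - transitivity ((mi+mj+mk)/mi * (z2*x3 - x2*z3)); [field; lra | rewrite C2; ring].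
    - transitivity ((mi+mj+mk)/mi * (x2*y3 - y2*x3)); [field; lra | rewrite C1; ring]. }
  assert (Hij : ai <> aj).
  { intro E; subst. apply HN. destruct aj, ak; unfold vcross, vsub, vzero; simpl.
    f_equal; ring. }
  assert (Hik : ai <> ak).
  { intro E; subst. apply HN. destruct aj, ak; unfold vcross, vsub, vzero; simpl.
    f_equal; ring. }
  pose proof (rdist_pos _ _ Hij) as Pij. pose proof (rdist_pos _ _ Hik) as Pik.
  split.
  - intro H. apply cube_inj; auto.
    destruct (Req_dec (mj * mk * (/ rdist ai aj ^ 3 - / rdist ai ak ^ 3)) 0) as [K|K].
    + assert (mj * mk <> 0) by nra.
      assert (/ rdist ai aj ^ 3 - / rdist ai ak ^ 3 = 0).
      { apply (Rmult_eq_reg_l (mj*mk)); auto. lra. }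
      lra.
    + exfalso. apply Hc. revert H K.
      generalize (mj * mk * (/ rdist ai aj ^ 3 - / rdist ai ak ^ 3)) as k.
      intros k H K. destruct (vcross aj ak) as [p q w].
      unfold vscale, vzero in *. injection H; intros.
      f_equal.
      * apply (Rmult_eq_reg_l k); auto; lra.
      * apply (Rmult_eq_reg_l k); auto; lra.
      * apply (Rmult_eq_reg_l k); auto; lra.
  - intro E. rewrite E. unfold vscale, vzero. f_equal; ring.
Qed.

Lemma rdist_sym (a b : vec3) : rdist a b = rdist b a.
Proof.
  unfold rdist, vnorm. f_equal. destruct a, b; unfold vdot, vsub; simpl; ring.
Qed.

Lemma cross_perm (a1 a2 a3 : vec3) :
  vcross (vsub a1 a2) (vsub a3 a2) = vscale (-1) (vcross (vsub a2 a1) (vsub a3 a1)).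
Proof. destruct a1, a2, a3; unfold vcross, vsub, vscale; simpl; f_equal; ring. Qed.

Lemma cross_perm2 (a1 a2 a3 : vec3) :
  vcross (vsub a1 a3) (vsub a2 a3) = vcross (vsub a2 a1) (vsub a3 a1).
Proof. destruct a1, a2, a3; unfold vcross, vsub, vscale; simpl; f_equal; ring. Qed.

Lemma scale_m1_nz (v : vec3) : v <> vzero -> vscale (-1) v <> vzero.
Proof.
  intros H E. apply H. destruct v; unfold vscale, vzero in *; simpl in *.
  injection E; intros; f_equal; lra.
Qed.

Theorem mainTheorem11 (m1 m2 m3 : R) (a1 a2 a3 : vec3) :
  0 < m1 -> 0 < m2 -> 0 < m3 -> m1 + m2 + m3 = 1 ->
  vadd (vadd (vscale m1 a1) (vscale m2 a2)) (vscale m3 a3) = vzero ->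
  nondegenerate a1 a2 a3 ->
  (torque m1 m2 m3 a1 a2 a3 = vzero <-> rdist a1 a2 = rdist a1 a3) /\
  ((torque m1 m2 m3 a1 a2 a3 = vzero /\
    torque m2 m1 m3 a2 a1 a3 = vzero /\
    torque m3 m1 m2 a3 a1 a2 = vzero) <-> equilateral a1 a2 a3).
Proof.
  intros H1 H2 H3 _ Hc Hn. unfold nondegenerate, equilateral in *.
  assert (Hx : m1 * vx a1 + m2 * vx a2 + m3 * vx a3 = 0)
    by (apply (f_equal vx) in Hc; exact Hc).
  assert (Hy : m1 * vy a1 + m2 * vy a2 + m3 * vy a3 = 0)
    by (apply (f_equal vy) in Hc; exact Hc).
  assert (Hz : m1 * vz a1 + m2 * vz a2 + m3 * vz a3 = 0)
    by (apply (f_equal vz) in Hc; exact Hc).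
  pose proof (torque_zero_iff m1 m2 m3 a1 a2 a3 H1 H2 H3 Hx Hy Hz Hn) as T1.
  assert (T2 := torque_zero_iff m2 m1 m3 a2 a1 a3 H2 H1 H3
                 ltac:(lra) ltac:(lra) ltac:(lra)
                 ltac:(rewrite cross_perm; apply scale_m1_nz; exact Hn)).
  assert (T3 := torque_zero_iff m3 m1 m2 a3 a1 a2 H3 H1 H2
                 ltac:(lra) ltac:(lra) ltac:(lra)
                 ltac:(rewrite cross_perm2; exact Hn)).
  rewrite T1, T2, T3.
  rewrite (rdist_sym a2 a1), (rdist_sym a3 a1), (rdist_sym a3 a2).
  split; [tauto|]. split; intros; lra.
Qed.
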